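(* Given any ILPDC $C$ and any ILFST $T$, there is an ILPDC $N$ such that $N(x)=C(T(x))$ for all $x\in\{0,1\}^*$. Similarly, given any ILUPDC $C$ and any ILFST $T$, there is an ILUPDC $N$ such that $N(x)=C(T(x))$ for all $x\in\{0,1\}^*$.
   Context: A finite-state transducer (FST) is $T=(Q,q_0,\delta,\nu)$ with finite state set $Q$, start state $q_0$, transition function $\delta:Q\times\{0,1\}\to Q$ and output function $\nu:Q\times\{0,1\}\to\{0,1\}^*$; with $\hat\delta$ the extended transition function, $T(\lambda)=\lambda$ and $T(xb)=T(x)\nu(\hat\delta(x),b)$. $T$ is information lossless (an ILFST) if $x\mapsto(T(x),\hat\delta(x))$ is injective. A pushdown compressor (PDC) is a tuple $C=(Q,\Gamma,\delta,\nu,q_0,z_0,c)$ where $Q$ is a finite nonempty set of states, $\Gamma=\{0,1,z_0\}$ is the stack alphabet with $z_0$ the bottom-of-stack symbol, $\delta: Q\times(\{0,1\}\cup\{\lambda\})\times\Gamma\to Q\times\Gamma^*$ is a partial transition function, $\nu: Q\times(\{0,1\}\cup\{\lambda\})\times\Gamma\to\{0,1\}^*$ is the output function, $q_0$ is the start state, and $c\in\mathbb{N}$ bounds the number of consecutive $\lambda$-transitions (transitions reading no input bit, which pop the top stack symbol and output nothing). On each transition the top stack symbol is replaced by the string given by $\delta$; $z_0$ is never removed. Determinism: for each state $q$ and top symbol $a$, either $\delta(q,\lambda,a)$ is undefined or $\delta(q,b,a)$ is undefined for both $b\in\{0,1\}$. After each input bit all available $\lambda$-transitions are performed. $C(w)$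 denotes the output on input $w$ from $q_0$ with stack $z_0$, and $\delta_Q(w)$ the resulting state. $C$ is information lossless (ILPDC) if $w\mapsto (C(w),\delta_Q(w))$ is injective. A unary-stack PDC (UPDC) is identical but with stack alphabet $\{0,z_0\}$; information lossless ones are ILUPDCs. The constant $c$ of $N$ may differ from that of $C$. *)

(* Defs.v *)
From mathcomp Require Import all_boot.

Set Implicit Arguments.
Unset Strict Implicit.
Unset Printing Implicit Defensive.

Record fst (Q : finType) := FST {
  fst_start : Q;
  fst_delta : Q -> bool -> Q;
  fst_nu    : Q -> bool -> seq bool }.

Definition fst_run (Q : finType) (T : fst Q) (x : seq bool) : Q * seq bool :=
  foldl (fun (p : Q * seq bool) b =>
           (fst_delta T p.1 b, p.2 ++ fst_nu T p.1 b))
        (fst_start T, [::]) x.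

Definition fst_state (Q : finType) (T : fst Q) (x : seq bool) : Q := (fst_run T x).1.
Definition fst_out (Q : finType) (T : fst Q) (x : seq bool) : seq bool := (fst_run T x).2.

Definition ILFST (Q : finType) (T : fst Q) : Prop :=
  injective (fun x => (fst_out T x, fst_state T x)).

(* symbols. The stack alphabet is [option A]; [None] is the bottom     *)
(* symbol z0. Input letters: [Some b] reads bit b, [None] is lambda.   *)
(* Stacks are sequences with the top symbol at the head.               *)
Record pdc (A : eqType) (Q : finType) := PDC {
  pdc_start : Q;
  pdc_delta : Q -> option bool -> option A -> option (Q * seq (option A));
  pdc_nu    : Q -> option bool -> option A -> seq bool;
  pdc_c     : nat }.

Section PDCSemantics.
Variables (A : eqType) (Q : finType) (C : pdc A Q).

Definition pconf := (Q * seq (option A) * seq bool)%type.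

Definition pdc_step_in (cf : pconf) (b : bool) : option pconf :=
  match cf with
  | (q, st, o) =>
    match st with
    | [::] => None
    | a :: rest =>
      match pdc_delta C q (Some b) a with
      | Some (q', s) => Some (q', s ++ rest, o ++ pdc_nu C q (Some b) a)
      | None => None
      end
    end
  end.

Fixpoint pdc_lam (n : nat) (cf : pconf) : option pconf :=
  match cf with
  | (q, st, o) =>
    match st with
    | [::] => None
    | a :: rest =>
      match pdc_delta C q None a with
      | None => Some cf
      | Some (q', s) =>
        match n with
        | 0 => None
        | n'.+1 => pdc_lam n' (q', s ++ rest, o ++ pdc_nu C q None a)
        end
      end
    end
  end.

Definition pdc_run (w : seq bool) : option pconf :=
  foldl (fun (ocf : option pconf) b =>
           match ocf with
           | None => None
           | Some cf =>
             match pdc_step_in cf b with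
             | None => None
             | Some cf' => pdc_lam (pdc_c C) cf'
             end
           end)
        (Some (pdc_start C, [:: None], [::])) w.

Definition pdc_out (w : seq bool) : seq bool :=
  if pdc_run w is Some (_, _, o) then o else [::].

Definition pdc_state (w : seq bool) : Q :=
  if pdc_run w is Some (q, _, _) then q else pdc_start C.

(* Well-formedness of a pushdown compressor:
   - determinism;
   - lambda-transitions pop the top symbol (z0 is never removed) and
     output nothing;
   - z0 is never removed: a transition on top z0 puts back a string
     ending with z0 (and no other z0), a transition on a non-bottom
     symbol pushes no z0;
   - the number of consecutive lambda-transitions is bounded by c and
     the machine never gets stuck, i.e. C(w) is defined for every w. *)
Definition pdc_ok : Prop :=
  [/\ (forall q a, pdc_delta C q None a = None \/
         (pdc_delta C q (Some false) a = None /\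
          pdc_delta C q (Some true) a = None)),
      (forall q a q' s, pdc_delta C q None a = Some (q', s) ->
         s = (if a is None then [:: None] else [::]) /\
         pdc_nu C q None a = [::]),
      (forall q ob a q' s, pdc_delta C q ob a = Some (q', s) ->
         match a return Prop with
         | None => exists2 s', s = rcons s' None & None \notin s'
         | Some _ => None \notin s
         end)
    & (forall w, pdc_run w <> None)].

Definition ILgen : Prop :=
  pdc_ok /\ injective (fun w => (pdc_out w, pdc_state w)).

End PDCSemantics.

(* PDC: stack alphabet {0,1,z0} = option bool (Some false, Some true, None) *)
(* UPDC: stack alphabet {0,z0} = option unit (Some tt, None) *)

Definition ILPDC (Q : finType) (C : pdc bool Q) : Prop := ILgen C.
Definition ILUPDC (Q : finType) (C : pdc unit Q) : Prop := ILgen C.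

(* Main.v *)
Require Import Defs.
From mathcomp Require Import all_boot zify.
Set Implicit Arguments. Unset Strict Implicit. Unset Printing Implicit Defensive.

Section Csem.
Variables (A : eqType) (Q : finType) (C : pdc A Q).

Definition cstep (ocf : option (pconf A Q)) (b : bool) : option (pconf A Q) :=
  match ocf with
  | None => None
  | Some cf =>
    match pdc_step_in C cf b with
    | None => None
    | Some cf' => pdc_lam C (pdc_c C) cf'
    end
  end.

Lemma run_cat w u : pdc_run C (w ++ u) = foldl cstep (pdc_run C w) u.
Proof. by rewrite /pdc_run foldl_cat. Qed.

Lemma fold_none u : foldl cstep None u = None.
Proof. by elim: u. Qed.

Definition shift (o : seq bool) (cf : pconf A Q) : pconf A Q :=
  let '(q, st, o') := cf in (q, st, o ++ o').

Lemma step_shift o q st o1 b :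
  pdc_step_in C (q, st, o ++ o1) b = omap (shift o) (pdc_step_in C (q, st, o1) b).
Proof.
case: st => [|a r] //=; case: (pdc_delta C q (Some b) a) => [[q' s]|] //=.
by rewrite catA.
Qed.

Lemma lam_shift o n q st o1 :
  pdc_lam C n (q, st, o ++ o1) = omap (shift o) (pdc_lam C n (q, st, o1)).
Proof.
elim: n q st o1 => [|n IH] q [|a r] o1 //=;
  case: (pdc_delta C q None a) => [[q' s]|] //=.
by rewrite -catA IH.
Qed.

Lemma cstep_shift o ocf b :
  cstep (omap (shift o) ocf) b = omap (shift o) (cstep ocf b).
Proof.
case: ocf => [[[q st] o1]|] //. rewrite [omap _ _]/= /cstep. idtac.
rewrite step_shift; case: (pdc_step_in C _ b) => [[[q' st'] o']|] //=.
by rewrite lam_shift.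
Qed.

Lemma fold_shift o ocf u :
  foldl cstep (omap (shift o) ocf) u = omap (shift o) (foldl cstep ocf u).
Proof. by elim: u ocf => [|b u IH] ocf //=; rewrite cstep_shift IH. Qed.

Lemma lam_trunc n q st r o q' X o' :
  pdc_lam C n (q, st ++ r, o) = Some (q', X, o') -> n < size st ->
  exists st', [/\ pdc_lam C n (q, st, o) = Some (q', st', o'), X = st' ++ r
              & size st - n <= size st'].
Proof.
elim: n q st o => [|n IH] q [|a st0] o //=;
  case: (pdc_delta C q None a) => [[q1 s]|] //=.
- by move=> [<- <- <-] _; exists (a :: st0); rewrite subn0.
- rewrite catA => /IH H Hs.
  have [|st' [H1 H2 H3]] := H; first by rewrite size_cat; apply: leq_trans (leq_addl _ _).
  exists st'; split => //; apply: leq_trans H3.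
  by rewrite size_cat subSS leq_sub2r // leq_addl.
- by move=> [<- <- <-] _; exists (a :: st0); split => //; apply: leq_subr.
Qed.

Lemma fold_trunc u q st r o q' X o' :
  foldl cstep (Some (q, st ++ r, o)) u = Some (q', X, o') ->
  size u * (pdc_c C).+1 < size st ->
  exists st', foldl cstep (Some (q, st, o)) u = Some (q', st', o') /\ X = st' ++ r.
Proof.
elim: u q st o => [|b u IH] q st o /=.
  by move=> [<- <- <-]; exists st.
case: st => [|a st0] //=.
case E: (pdc_delta C q (Some b) a) => [[q1 s]|]; last by rewrite fold_none.
case E2: (pdc_lam C (pdc_c C) (q1, s ++ st0 ++ r, o ++ pdc_nu C q (Some b) a)) => [[[q2 X2] o2]|];
  last by rewrite fold_none.
move=> Hf Hs; rewrite mulSn in Hs.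
move: E2; rewrite catA => /lam_trunc [|st2 [H1 H2 H3]].
  rewrite size_cat /=; move: Hs => /=; lia.
rewrite H1; subst X2.
apply: (IH _ _ _ Hf).
move: H3 Hs; rewrite size_cat /=; lia.
Qed.

Fixpoint goodb (s : seq (option A)) : bool :=
  match s with
  | [::] => false
  | None :: r => r == [::]
  | Some _ :: r => goodb r
  end.

Lemma goodb_cat s r : None \notin s -> goodb (s ++ r) = goodb r.
Proof. elim: s => [|[x|] s IH] //; rewrite in_cons negb_or => /andP[_ H] /=; exact: IH. Qed.

Lemma goodb_split s r : goodb (s ++ r) -> goodb r -> None \notin s.
Proof.
elim: s => [|a s IH] // H1 H2; case: a H1 => [x|] H1.
  by rewrite in_cons negb_or /= (IH H1 H2).
move: H1 H2; case: s {IH} => [|y s] /=; case: r => //=.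
Qed.

Lemma goodb_filter s : goodb s -> s = rcons (filter isSome s) None.
Proof. by elim: s => [|[x|] s IH] //= => [/IH <-|/eqP ->]. Qed.

Lemma goodb_rcons s : None \notin s -> goodb (rcons s None).
Proof. by move=> H; rewrite -cats1 goodb_cat. Qed.

Lemma filter_notin (s : seq (option A)) : None \notin filter isSome s.
Proof. by rewrite mem_filter. Qed.

Hypothesis Hz : forall q ob a q' s, pdc_delta C q ob a = Some (q', s) ->
         match a return Prop with
         | None => exists2 s', s = rcons s' None & None \notin s'
         | Some _ => None \notin s
         end.

Lemma good_delta q ob a q' s rest : pdc_delta C q ob a = Some (q', s) ->
  goodb (a :: rest) -> goodb (s ++ rest).
Proof.
move/Hz; case: a => [x|] /=; first by move=> H; rewrite goodb_cat.
by move=> [s' -> H] /eqP ->; rewrite cats0 goodb_rcons.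
Qed.

Lemma good_step_in q st o b q' st' o' :
  pdc_step_in C (q, st, o) b = Some (q', st', o') -> goodb st -> goodb st'.
Proof.
case: st => [|a r] //=; case E: (pdc_delta C q (Some b) a) => [[q1 s]|] //=.
by move=> [_ <- _]; apply: good_delta E.
Qed.

Lemma good_lam n q st o q' st' o' :
  pdc_lam C n (q, st, o) = Some (q', st', o') -> goodb st -> goodb st'.
Proof.
elim: n q st o => [|n IH] q [|a r] o //=; case E: (pdc_delta C q None a) => [[q1 s]|] //=;
  try by move=> [_ <- _].
by move/IH => H /(good_delta E); apply: H.
Qed.

Lemma good_fold u q st o q' st' o' :
  foldl cstep (Some (q, st, o)) u = Some (q', st', o') -> goodb st -> goodb st'.
Proof.
elim: u q st o => [|b u IH] q st o; first by move=> [_ <- _].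
rewrite -[foldl _ _ (b :: u)]/(foldl cstep (cstep (Some (q,st,o)) b) u) /cstep.
case E: (pdc_step_in C (q, st, o) b) => [[[q1 s1] o1]|]; last by rewrite fold_none.
case E2: (pdc_lam C (pdc_c C) (q1, s1, o1)) => [[[q2 s2] o2]|]; last by rewrite fold_none.
move/IH => H /(good_step_in E) /(good_lam E2); exact: H.
Qed.

Lemma good_run w q st o : pdc_run C w = Some (q, st, o) -> goodb st.
Proof. by move/good_fold; apply. Qed.
End Csem.

Section Cons.
Variables (A : finType) (Q QT : finType) (C : pdc A Q) (T : fst QT).

Definition LL := \max_(p : QT * bool) size (fst_nu T p.1 p.2).
Definition KK := LL * (pdc_c C).+1.

Lemma LL_bound q b : size (fst_nu T q b) <= LL.
Proof. exact: (leq_bigmax (F := fun p : QT * bool => size (fst_nu T p.1 p.2)) (q, b)). Qed.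

Definition UU : seq (seq (option A)) :=
  flatten [seq [seq tval t | t : n.-tuple (option A)] | n <- iota 0 KK.+1].

Lemma memU s : size s <= KK -> s \in UU.
Proof.
move=> H; apply/flattenP; exists [seq tval t | t : (size s).-tuple (option A)].
  by apply/mapP; exists (size s) => //; rewrite mem_iota /= add0n ltnS.
by apply/imageP; exists (in_tuple s).
Qed.

Definition BufT := seq_sub UU.
Definition buf0 : BufT := SeqSub (memU (s := [::]) (leq0n _)).
Definition mkbuf (s : seq (option A)) : BufT := insubd buf0 s.
Lemma mkbufK s : size s <= KK -> ssval (mkbuf s) = s.
Proof. by move=> H; rewrite /mkbuf insubdK //; apply: memU. Qed.

Definition QN := (QT * Q * BufT)%type.

Definition chunk qC st u := foldl (cstep C) (Some (qC, st, [::])) u.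

Definition lamcase (bf : BufT) (a : option A) : bool :=
  (size (ssval bf) < KK) && (a != None).

Definition tailz (a : option A) : seq (option A) := if a is None then [:: None] else [::].

Definition deltaN (qs : QN) (ob : option bool) (a : option A) : option (QN * seq (option A)) :=
  let: (qT, qC, bf) := qs in
  if lamcase bf a then
    match ob with None => Some ((qT, qC, mkbuf (rcons (ssval bf) a)), [::]) | Some _ => None end
  else match ob with None => None | Some b =>
    match chunk qC (rcons (ssval bf) a) (fst_nu T qT b) with
    | Some (q', st', _) =>
        Some ((fst_delta T qT b, q', mkbuf (take KK (filter isSome st'))),
              drop KK (filter isSome st') ++ tailz a)
    | None => None end end.

Definition nuN (qs : QN) (ob : option bool) (a : option A) : seq bool :=
  let: (qT, qC, bf) := qs in
  if lamcase bf a then [::]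
  else match ob with None => [::] | Some b =>
    match chunk qC (rcons (ssval bf) a) (fst_nu T qT b) with
    | Some (_, _, o') => o'
    | None => [::] end end.

Definition NN : pdc A QN := PDC (fst_start T, pdc_start C, buf0) deltaN nuN KK.

End Cons.

Lemma pdc_run_rcons (A : eqType) (Q : finType) (C : pdc A Q) w b :
  pdc_run C (rcons w b) = cstep C (pdc_run C w) b.
Proof. by rewrite -cats1 run_cat. Qed.

Lemma fst_state_rcons (QT : finType) (T : fst QT) x b :
  fst_state T (rcons x b) = fst_delta T (fst_state T x) b.
Proof. by rewrite /fst_state /fst_run -cats1 foldl_cat. Qed.

Lemma fst_out_rcons (QT : finType) (T : fst QT) x b :
  fst_out T (rcons x b) = fst_out T x ++ fst_nu T (fst_state T x) b.
Proof. by rewrite /fst_out /fst_state /fst_run -cats1 foldl_cat. Qed.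

Arguments deltaN : simpl never.
Arguments nuN : simpl never.
Arguments chunk : simpl never.

Lemma notin_filter (A : eqType) (s : seq (option A)) : None \notin s -> filter isSome s = s.
Proof. by elim: s => [|[x|] s IH] //=; rewrite in_cons negb_or => /andP[_ /IH ->]. Qed.

Section Proofs.
Variables (A : finType) (Q QT : finType) (C : pdc A Q) (T : fst QT).
Hypothesis okC : pdc_ok C.
Let N := NN C T.
Let K := KK C T.

Lemma memU' s : s \in UU C T -> size s <= K.
Proof.
case/flattenP => l /mapP [n]; rewrite mem_iota add0n ltnS => Hn -> /imageP [t _ ->].
by rewrite size_tuple.
Qed.

Lemma bf_size (bf : BufT C T) : size (ssval bf) <= K.
Proof. exact: memU' (ssvalP bf). Qed.

Definition Full (bf : BufT C T) (Nst : seq (option A)) :=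
  (K <= size (ssval bf)) || (head None Nst == None).

Definition Inv x (cf : pconf A (QN C T)) : Prop :=
  exists qC bf Nst o, [/\ cf = ((fst_state T x, qC, bf), Nst, o),
    pdc_run C (fst_out T x) = Some (qC, ssval bf ++ Nst, o), goodb Nst,
    None \notin ssval bf & Full bf Nst].

Lemma lamN n x qC bf Nst o :
  pdc_run C (fst_out T x) = Some (qC, ssval bf ++ Nst, o) -> goodb Nst ->
  None \notin ssval bf -> K <= n + size (ssval bf) ->
  exists cf', pdc_lam N n ((fst_state T x, qC, bf), Nst, o) = Some cf' /\ Inv x cf'.
Proof.
elim: n bf Nst o => [|n IH] bf [|a rest] o //= Hr Hg Hb Hs.
- have Hl : ~~ lamcase bf a by rewrite /lamcase -/K ltnNge Hs.
  rewrite /deltaN (negbTE Hl).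
  eexists; split; first by reflexivity.
  by exists qC, bf, (a :: rest), o; split => //; rewrite /Full Hs.
- case: (boolP (lamcase bf a)) => Hl.
  + rewrite /deltaN Hl /= /nuN Hl cats0.
    move: Hl; rewrite /lamcase; case/andP => Hl Ha.
    have Hk : size (rcons (ssval bf) a) <= KK C T by rewrite size_rcons.
    apply: IH; rewrite ?mkbufK //.
    * by rewrite -cats1 -catA.
    * by case: a {Hr Hk} Ha Hg.
    * by rewrite -cats1 mem_cat negb_or Hb /= inE; case: a {Hr Hk Hg} Ha.
    * by rewrite size_rcons addnS.
  + rewrite /deltaN (negbTE Hl).
    eexists; split; first by reflexivity.
    exists qC, bf, (a :: rest), o; split => //; rewrite /Full /=.
    by move: Hl; rewrite /lamcase negb_and -leqNgt negbK /K.
Qed.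

Lemma stepN x b cf : Inv x cf -> exists cf', pdc_step_in N cf b = Some cf' /\
  exists qC bf Nst o, [/\ cf' = ((fst_state T (rcons x b), qC, bf), Nst, o),
    pdc_run C (fst_out T (rcons x b)) = Some (qC, ssval bf ++ Nst, o), goodb Nst &
    None \notin ssval bf].
Proof.
case: okC => _ _ Hz Hnn.
case=> qC [bf [[|a rest] [o [-> Hr Hg Hb Hf]]]] //.
have Hl : ~~ lamcase bf a.
  by move: Hf; rewrite /Full /lamcase negb_and -leqNgt negbK /K /=; case/orP=> ->; rewrite ?orbT.
set u := fst_nu T (fst_state T x) b.
have Hrun : pdc_run C (fst_out T x ++ u) = foldl (cstep C) (Some (qC, ssval bf ++ a :: rest, o)) u.
  by rewrite run_cat Hr.
case E: (foldl (cstep C) (Some (qC, ssval bf ++ a :: rest, o)) u) => [[[q2 X] o2]|];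
  last by case: (Hnn (fst_out T x ++ u)); rewrite Hrun E.
have [st' [H1 H2]] : exists st', foldl (cstep C) (Some (qC, rcons (ssval bf) a, o)) u = Some (q2, st', o2)
    /\ X = st' ++ rest.
  case: a Hr Hg Hl Hf E {Hrun} => [y|] Hr Hg Hl Hf E.
    move: E; rewrite -cat_rcons => /fold_trunc; case.
      apply: leq_ltn_trans (_ : size u * (pdc_c C).+1 <= K) _.
        by rewrite /K /KK leq_mul2r LL_bound orbT.
      by rewrite size_rcons ltnS; move: Hf; rewrite /Full orbF.
    by move=> st' [? ?]; exists st'.
  move: Hg => /= /eqP Hrest; subst rest.
  by exists X; rewrite cats0 -cats1.
have := fold_shift C o (Some (qC, rcons (ssval bf) a, [::])) u.
rewrite /= cats0 H1 -/(chunk C qC (rcons (ssval bf) a) u).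
case Ech: (chunk C qC (rcons (ssval bf) a) u) => [[[q3 st3] o3]|] //= [Hq Hs3 Ho]; subst q3 st3.
rewrite /N /NN /= /deltaN (negbTE Hl) /= Ech /nuN (negbTE Hl) Ech.
eexists; split; first by reflexivity.
set fs := filter isSome st'.
have Hgood : goodb (st' ++ rest).
  by apply: (good_run Hz (w := fst_out T x ++ u)); rewrite Hrun E H2.
have Hst : st' ++ rest = fs ++ tailz a ++ rest /\ goodb (drop K fs ++ tailz a ++ rest).
  case: a Hr Hg Hl Hf E H1 Ech Hgood {Hrun} => [y|] Hr Hg Hl Hf E H1 Ech Hgood.
    have Hn : None \notin st' by apply: goodb_split Hgood Hg.
    rewrite /fs notin_filter //=; split => //.
    by rewrite goodb_cat //; apply/negP => /mem_drop; apply/negP.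
  move: Hg => /= /eqP Hrest; subst rest.
  rewrite cats0 in Hgood; rewrite !cats0 /=; split; first by rewrite cats1 -goodb_filter.
  by rewrite cats1 goodb_rcons //; apply/negP => /mem_drop; rewrite mem_filter.
case: Hst => Hst1 Hst2.
exists q2. exists (mkbuf C T (take K fs)). exists ((drop K fs ++ tailz a) ++ rest). exists (o ++ o3). split.
- by rewrite fst_state_rcons.
- rewrite fst_out_rcons run_cat Hr E H2 Ho mkbufK; last by rewrite size_take_min geq_minl.
  by rewrite !catA cat_take_drop -catA -Hst1.
- by rewrite -catA.
- rewrite mkbufK; last by rewrite size_take_min geq_minl.
  by apply/negP => /mem_take; rewrite mem_filter.
Qed.

Lemma invN x : exists cf, pdc_run N x = Some cf /\ Inv x cf.
Proof.
elim/last_ind: x => [|x b [cf [Hx Hi]]].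
  eexists; split; first by reflexivity.
  exists (pdc_start C), (buf0 C T), [:: None], [::]; split => //.
  by rewrite /Full /= orbT.
rewrite pdc_run_rcons Hx /cstep.
have [cf' [-> [qC [bf [Nst [o [-> Hr Hg Hb]]]]]]] := stepN b Hi.
by apply: lamN => //; rewrite leq_addr.
Qed.

Lemma okN : pdc_ok N.
Proof.
split.
- move=> [[qT qC] bf] a; rewrite /N /NN /= /deltaN.
  by case: (lamcase bf a); [right | left].
- move=> [[qT qC] bf] a q' s; rewrite /N /NN /= /deltaN /nuN.
  case: (boolP (lamcase bf a)) => // /andP [_ Ha] [_ <-].
  by case: a Ha.
- move=> [[qT qC] bf] ob a q' s; rewrite /N /NN /= /deltaN.
  case: (boolP (lamcase bf a)) => Hl.
    case: ob => //; case=> _ <-; move: Hl => /andP [_]; by case: a.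
  case: ob => // b; case: (chunk _ _ _ _) => [[[q2 st2] o2]|] // [_ <-].
  have Hn : None \notin drop (KK C T) (filter isSome st2).
    by apply/negP => /mem_drop; rewrite mem_filter.
  case: a {Hl} => [y|] /=; first by rewrite cats0.
  by exists (drop (KK C T) (filter isSome st2)); rewrite ?cats1.
- by move=> w; have [cf [-> _]] := invN w.
Qed.

Lemma outN x : pdc_out N x = pdc_out C (fst_out T x) /\
  exists qC bf, pdc_state N x = (fst_state T x, qC, bf) /\ pdc_state C (fst_out T x) = qC.
Proof.
have [cf [Hx [qC [bf [Nst [o [Hcf Hr _ _ _]]]]]]] := invN x.
subst cf; rewrite /pdc_out /pdc_state Hx Hr; split => //.
by exists qC, bf.
Qed.

Lemma ILN : ILgen C -> ILFST T -> ILgen N.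
Proof.
move=> [_ HC] HT; split; first exact: okN.
move=> x y /= [Ho Hs].
have [Ox [qx [bx [Sx SCx]]]] := outN x.
have [Oy [qy [byy [Sy SCy]]]] := outN y.
move: Hs; rewrite Sx Sy => -[HsT Hq _].
apply: HT => /=; rewrite HsT; congr (_, _).
apply: HC => /=; rewrite -Ox -Oy Ho SCx SCy Hq //.
Qed.
End Proofs.

Lemma gen_thm (A : finType) (Q : finType) (C : pdc A Q) (QT : finType) (T : fst QT) :
  ILgen C -> ILFST T ->
  exists (QN : finType) (N : pdc A QN), ILgen N /\ forall x, pdc_out N x = pdc_out C (fst_out T x).
Proof.
move=> HC HT; case: (HC) => okC _.
exists (QN C T), (NN C T); split; first exact: ILN.
by move=> x; case: (outN T okC x).
Qed.

Theorem mainTheorem2 :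
  (forall (Q : finType) (C : pdc bool Q) (QT : finType) (T : fst QT),
      ILPDC C -> ILFST T ->
      exists (QN : finType) (N : pdc bool QN),
        ILPDC N /\ forall x : seq bool, pdc_out N x = pdc_out C (fst_out T x)) /\
  (forall (Q : finType) (C : pdc unit Q) (QT : finType) (T : fst QT),
      ILUPDC C -> ILFST T ->
      exists (QN : finType) (N : pdc unit QN),
        ILUPDC N /\ forall x : seq bool, pdc_out N x = pdc_out C (fst_out T x)).
Proof.
split=> Q C QT T HC HT.
- exact: (@gen_thm bool Q C QT T HC HT).
- exact: (@gen_thm unit Q C QT T HC HT).
Qed.
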